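(* In the pure braid group $P_3$, the subgroup $Q_{\{2\}}\cap Q_{\{3\}}$ has infinite index in $Q_{\{2\}}$ and is not finitely generated.
   Context: $P_3$ denotes the pure braid group on $3$ strands, generated by $p_{1,2},p_{1,3},p_{2,3}$ subject to the relations $p_{1,2}p_{1,3}p_{2,3}=p_{1,3}p_{2,3}p_{1,2}=p_{2,3}p_{1,2}p_{1,3}$. For $S\subseteq\{1,2,3\}$, $Q_S$ is the subgroup of $P_3$ generated by the $p_{a,b}$ ($a<b$) with $a\in S$ or $b\in S$; thus $Q_{\{2\}}=\langle p_{1,2},p_{2,3}\rangle$ and $Q_{\{3\}}=\langle p_{1,3},p_{2,3}\rangle$. *)

(* Defs.v *)
(* The pure braid group P_3 is modelled by its presentation:
   words in the generators p12, p13, p23 and their inverses, modulo the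
   congruence generated by free cancellation and the defining relations
   p12 p13 p23 = p13 p23 p12 = p23 p12 p13.  Subgroups are predicates on
   words that are closed under this congruence. *)
From Stdlib Require Import List Bool.
Import ListNotations.

Inductive gen : Type := p12 | p13 | p23.

Definition gen_idx (g : gen) : nat * nat :=
  match g with p12 => (1, 2) | p13 => (1, 3) | p23 => (2, 3) end.

(* a letter: a generator with a sign (true = the generator, false = its inverse) *)
Definition letter := (gen * bool)%type.
Definition word := list letter.

Definition linv (a : letter) : letter := (fst a, negb (snd a)).
Definition winv (w : word) : word := rev (map linv w).
Definition pos (g : gen) : letter := (g, true).

Definition relA : word := [pos p12; pos p13; pos p23].
Definition relB : word := [pos p13; pos p23; pos p12].
Definition relC : word := [pos p23; pos p12; pos p13].

Inductive braid_rel : word -> word -> Prop :=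
| br_AB : braid_rel relA relB
| br_BC : braid_rel relB relC.

Inductive P3eq : word -> word -> Prop :=
| P3eq_refl : forall w, P3eq w w
| P3eq_sym : forall w1 w2, P3eq w1 w2 -> P3eq w2 w1
| P3eq_trans : forall w1 w2 w3, P3eq w1 w2 -> P3eq w2 w3 -> P3eq w1 w3
| P3eq_cancel : forall u v a, P3eq (u ++ [a; linv a] ++ v) (u ++ v)
| P3eq_rel : forall u v r1 r2, braid_rel r1 r2 -> P3eq (u ++ r1 ++ v) (u ++ r2 ++ v).

Definition involves (S : nat -> Prop) (g : gen) : Prop :=
  S (fst (gen_idx g)) \/ S (snd (gen_idx g)).

Definition Q (S : nat -> Prop) (w : word) : Prop :=
  exists u : word, (forall a, In a u -> involves S (fst a)) /\ P3eq w u.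

Definition Q2 : word -> Prop := Q (fun i => i = 2).
Definition Q3 : word -> Prop := Q (fun i => i = 3).

Definition sub_inter (H K : word -> Prop) : word -> Prop := fun w => H w /\ K w.

Definition has_finite_index (H K : word -> Prop) : Prop :=
  exists reps : list word,
    forall k, K k -> exists r, In r reps /\ H (winv r ++ k).

Definition finitely_generated (H : word -> Prop) : Prop :=
  exists gens : list word,
    (forall g, In g gens -> H g) /\
    forall h, H h ->
      exists l : list (word * bool),
        (forall p, In p l -> In (fst p) gens) /\
        P3eq h (concat (map (fun p : word * bool => if snd p then fst p else winv (fst p)) l)).

(* Main.v *)
Require Import Defs.
From Stdlib Require Import List Bool ZArith Lia.
Import ListNotations.
Open Scope Z_scope.

Definition sumw (f : letter -> Z) (w : word) : Z :=
  fold_right (fun a acc => f a + acc) 0 w.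

Lemma sumw_app f u v : sumw f (u ++ v) = sumw f u + sumw f v.
Proof. induction u; simpl; [lia|]. rewrite IHu; lia. Qed.

Lemma sumw_inv f (Hinv : forall a, f (linv a) = - f a)
  (HAB : sumw f relA = sumw f relB) (HBC : sumw f relB = sumw f relC) :
  forall w1 w2, P3eq w1 w2 -> sumw f w1 = sumw f w2.
Proof.
  intros w1 w2 H; induction H; try lia.
  - rewrite !sumw_app; simpl; rewrite Hinv; lia.
  - rewrite !sumw_app. destruct H; lia.
Qed.

Lemma sumw_winv f (Hinv : forall a, f (linv a) = - f a) w :
  sumw f (winv w) = - sumw f w.
Proof.
  induction w as [|a w IH]; [reflexivity|].
  unfold winv in *; simpl. rewrite sumw_app, IH; simpl. rewrite Hinv; lia.
Qed.

Definition sgn (b : bool) : Z := if b then 1 else -1.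

Definition e12 (a : letter) : Z := match a with (p12, b) => sgn b | _ => 0 end.
Definition e13 (a : letter) : Z := match a with (p13, b) => sgn b | _ => 0 end.
Definition dshift (a : letter) : Z :=
  match a with (p12, b) => sgn b | (p13, b) => - sgn b | (p23, _) => 0 end.

Lemma e12_inv a : e12 (linv a) = - e12 a. Proof. destruct a as [[] []]; reflexivity. Qed.
Lemma e13_inv a : e13 (linv a) = - e13 a. Proof. destruct a as [[] []]; reflexivity. Qed.
Lemma dshift_inv a : dshift (linv a) = - dshift a. Proof. destruct a as [[] []]; reflexivity. Qed.

Lemma e12_P3 w1 w2 : P3eq w1 w2 -> sumw e12 w1 = sumw e12 w2.
Proof. apply sumw_inv; [exact e12_inv|reflexivity|reflexivity]. Qed.
Lemma e13_P3 w1 w2 : P3eq w1 w2 -> sumw e13 w1 = sumw e13 w2.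
Proof. apply sumw_inv; [exact e13_inv|reflexivity|reflexivity]. Qed.

Definition shift := sumw dshift.

Lemma shift_split w : shift w = sumw e12 w - sumw e13 w.
Proof. induction w as [|a w IH]; [reflexivity|]. unfold shift, sumw in *; cbn [fold_right].
  rewrite IH. destruct a as [[] []]; cbn [dshift e12 e13 sgn]; lia. Qed.

Definition cc (a : letter) (i : Z) : Z :=
  match a with
  | (p12, _) => 0
  | (p13, true) => if Z.eqb i 0 then 1 else 0
  | (p13, false) => if Z.eqb i 1 then -1 else 0
  | (p23, true) => if Z.eqb i 1 then -1 else 0
  | (p23, false) => if Z.eqb i 1 then 1 else 0
  end.

Fixpoint lamp (w : word) (i : Z) : Z :=
  match w with [] => 0 | a :: w' => cc a i + lamp w' (i - dshift a) end.

Lemma lamp_app u v i : lamp (u ++ v) i = lamp u i + lamp v (i - shift u).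
Proof.
  revert i; induction u as [|a u IH]; intros i; simpl.
  - unfold shift; simpl. f_equal; lia.
  - rewrite IH. unfold shift; simpl.
    replace (i - dshift a - sumw dshift u) with (i - (dshift a + sumw dshift u)) by lia. lia.
Qed.

Ltac zcases := repeat match goal with |- context [Z.eqb ?x ?y] => destruct (Z.eqb_spec x y) end; lia.

Lemma lamp_P3 w1 w2 : P3eq w1 w2 -> forall i, lamp w1 i = lamp w2 i.
Proof.
  intros H; induction H; intros i; try congruence.
  - rewrite !lamp_app.
    assert (Hs : shift [a; linv a] = 0) by (unfold shift, sumw; cbn [fold_right]; rewrite dshift_inv; lia).
    rewrite Hs.
    assert (Hl : forall j, lamp [a; linv a] j = 0) by
      (intros j; destruct a as [[] []]; simpl; zcases).
    rewrite Hl. replace (i - shift u - 0) with (i - shift u) by lia. lia.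
  - rewrite !lamp_app.
    assert (Hr : forall r, r = relA \/ r = relB \/ r = relC ->
       shift r = 0 /\ forall j, lamp r j = 0).
    { intros r [ -> | [ -> | -> ] ]; split; try reflexivity; intros j; simpl; zcases. }
    assert (H12 : (r1 = relA \/ r1 = relB \/ r1 = relC) /\ (r2 = relA \/ r2 = relB \/ r2 = relC))
      by (destruct H; auto).
    destruct H12 as [E1 E2].
    destruct (Hr _ E1) as [S1 L1]; destruct (Hr _ E2) as [S2 L2].
    rewrite S1, S2, L1, L2. reflexivity.
Qed.

Lemma lamp_support w i : i > Z.of_nat (length w) + 1 -> lamp w i = 0.
Proof.
  revert i; induction w as [|a w IH]; intros i Hi; simpl; [reflexivity|].
  simpl length in Hi. rewrite Nat2Z.inj_succ in Hi.
  rewrite IH.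
  - destruct a as [[] []]; simpl; zcases.
  - destruct a as [[] []]; simpl; lia.
Qed.

Lemma cong u v w1 w2 : P3eq w1 w2 -> P3eq (u ++ w1 ++ v) (u ++ w2 ++ v).
Proof.
  intros H; induction H.
  - apply P3eq_refl.
  - apply P3eq_sym; assumption.
  - eapply P3eq_trans; eassumption.
  - pose proof (P3eq_cancel (u ++ u0) (v0 ++ v) a) as K.
    rewrite <- !app_assoc in *. exact K.
  - pose proof (P3eq_rel (u ++ u0) (v0 ++ v) r1 r2 H) as K.
    rewrite <- !app_assoc in *. exact K.
Qed.

Lemma P3eq_app a b c d : P3eq a b -> P3eq c d -> P3eq (a ++ c) (b ++ d).
Proof.
  intros H1 H2. apply P3eq_trans with (b ++ c).
  - pose proof (cong [] c a b H1) as K. simpl in K. exact K.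
  - pose proof (cong b [] c d H2) as K. rewrite !app_nil_r in K. exact K.
Qed.

Definition z : word := relB.

Lemma linv_inv a : linv (linv a) = a.
Proof. destruct a as [g []]; reflexivity. Qed.

Lemma zcomm_inv a : P3eq (z ++ [a]) ([a] ++ z) -> P3eq (z ++ [linv a]) ([linv a] ++ z).
Proof.
  intros H. set (la := linv a).
  apply P3eq_trans with ([la; a] ++ z ++ [la]).
  { apply P3eq_sym. pose proof (P3eq_cancel [] (z ++ [la]) la) as K.
    unfold la in K at 2. rewrite linv_inv in K. exact K. }
  apply P3eq_trans with ([la] ++ (z ++ [a]) ++ [la]).
  { change (P3eq ([la] ++ ([a] ++ z) ++ [la]) ([la] ++ (z ++ [a]) ++ [la])).
    apply cong. apply P3eq_sym; exact H. }
  exact (P3eq_cancel ([la] ++ z) [] a).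
Qed.

Lemma zcomm_letter a : P3eq (z ++ [a]) ([a] ++ z).
Proof.
  assert (Hp : forall g, P3eq (z ++ [pos g]) ([pos g] ++ z)).
  { intros []. 
    - apply P3eq_sym; exact (P3eq_rel [] [pos p12] _ _ br_AB).
    - apply P3eq_sym; exact (P3eq_rel [pos p13] [] _ _ br_BC).
    - eapply P3eq_trans. exact (P3eq_rel [] [pos p23] _ _ br_BC).
      exact (P3eq_rel [pos p23] [] _ _ br_AB). }
  destruct a as [g []].
  - apply Hp.
  - exact (zcomm_inv (pos g) (Hp g)).
Qed.

Lemma zcomm_word X : P3eq (z ++ X) (X ++ z).
Proof.
  induction X as [|a X IH].
  - rewrite app_nil_r; apply P3eq_refl.
  - apply P3eq_trans with ([a] ++ z ++ X).
    + change (P3eq ([] ++ (z ++ [a]) ++ X) ([] ++ ([a] ++ z) ++ X)).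
      apply cong, zcomm_letter.
    + change (P3eq ([a] ++ (z ++ X)) ([a] ++ (X ++ z))).
      apply P3eq_app; [apply P3eq_refl|exact IH].
Qed.

Definition neg (g : gen) : letter := (g, false).

Lemma conj13 X :
  P3eq ([neg p13] ++ X ++ [pos p13]) ([pos p23; pos p12] ++ X ++ [neg p12; neg p23]).
Proof.
  assert (S1 : P3eq [pos p13] (z ++ [neg p12; neg p23])).
  { apply P3eq_sym. eapply P3eq_trans.
    - exact (P3eq_cancel [pos p13; pos p23] [neg p23] (pos p12)).
    - exact (P3eq_cancel [pos p13] [] (pos p23)). }
  apply P3eq_trans with ([neg p13] ++ X ++ (z ++ [neg p12; neg p23])).
  { apply P3eq_app; [apply P3eq_refl|]. apply P3eq_app; [apply P3eq_refl|exact S1]. }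
  rewrite (app_assoc X z).
  apply P3eq_trans with ([neg p13] ++ (z ++ X) ++ [neg p12; neg p23]).
  { apply cong. apply P3eq_sym, zcomm_word. }
  replace ([neg p13] ++ (z ++ X) ++ [neg p12; neg p23])
    with (([neg p13] ++ z) ++ (X ++ [neg p12; neg p23])) by (rewrite <- !app_assoc; reflexivity).
  apply (P3eq_app _ [pos p23; pos p12] _ (X ++ [neg p12; neg p23])); [|apply P3eq_refl].
  exact (P3eq_cancel [] [pos p23; pos p12] (neg p13)).
Qed.

Fixpoint Cw (m : nat) : word := match m with O => [] | S m => neg p13 :: Cw m end.
Fixpoint Aw (m : nat) : word := match m with O => [] | S m => pos p23 :: pos p12 :: Aw m end.
Fixpoint Bw (m : nat) : word := match m with O => [] | S m => Bw m ++ [neg p12; neg p23] end.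

Lemma hQ2 m : P3eq (Cw m ++ [pos p23] ++ winv (Cw m)) (Aw m ++ [pos p23] ++ Bw m).
Proof.
  induction m as [|m IH]; [apply P3eq_refl|].
  assert (E : winv (Cw (S m)) = winv (Cw m) ++ [pos p13]) by reflexivity.
  rewrite E.
  replace (Cw (S m) ++ [pos p23] ++ winv (Cw m) ++ [pos p13])
    with ([neg p13] ++ (Cw m ++ [pos p23] ++ winv (Cw m)) ++ [pos p13])
    by (simpl; repeat rewrite <- app_assoc; simpl; reflexivity).
  eapply P3eq_trans; [apply conj13|].
  replace (Aw (S m) ++ [pos p23] ++ Bw (S m))
    with ([pos p23; pos p12] ++ (Aw m ++ [pos p23] ++ Bw m) ++ [neg p12; neg p23])
    by (simpl; repeat rewrite <- app_assoc; simpl; reflexivity).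
  apply cong, IH.
Qed.

Lemma winv_nil u : P3eq (u ++ winv u) [].
Proof.
  induction u as [|a u IH]; [apply P3eq_refl|].
  replace ((a :: u) ++ winv (a :: u)) with ([a] ++ (u ++ winv u) ++ [linv a])
    by (unfold winv; simpl; repeat rewrite <- app_assoc; simpl; reflexivity).
  eapply P3eq_trans. apply cong, IH.
  exact (P3eq_cancel [] [] a).
Qed.

Lemma lamp_conj u X i : shift X = 0 -> lamp (u ++ X ++ winv u) i = lamp X (i - shift u).
Proof.
  intros HX.
  pose proof (lamp_P3 _ _ (winv_nil u) i) as K. rewrite lamp_app in K. simpl in K.
  rewrite lamp_app, lamp_app, HX.
  replace (i - shift u - 0) with (i - shift u) by lia. lia.
Qed.

Lemma shift_Cw m : shift (Cw m) = Z.of_nat m.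
Proof. induction m; [reflexivity|]. unfold shift, sumw in *; cbn [Cw fold_right dshift neg sgn].
  rewrite IHm. lia. Qed.

Lemma in_winv a u : In a (winv u) -> exists b, In b u /\ fst a = fst b.
Proof.
  unfold winv; intros H. apply in_rev in H. apply in_map_iff in H.
  destruct H as [b [<- Hb]]. exists b; split; [exact Hb|reflexivity].
Qed.

Lemma sumw_no12 u : (forall a, In a u -> fst a <> p12) -> sumw e12 u = 0.
Proof.
  induction u as [|[g b] u IH]; intros H; [reflexivity|]; simpl.
  rewrite IH by (intros; apply H; simpl; auto).
  destruct g; [exfalso; apply (H (p12, b)); simpl; auto|reflexivity|reflexivity].
Qed.
Lemma sumw_no13 u : (forall a, In a u -> fst a <> p13) -> sumw e13 u = 0.
Proof.
  induction u as [|[g b] u IH]; intros H; [reflexivity|]; simpl.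
  rewrite IH by (intros; apply H; simpl; auto).
  destruct g; [reflexivity|exfalso; apply (H (p13, b)); simpl; auto|reflexivity].
Qed.

Lemma Q3_e12 w : Q3 w -> sumw e12 w = 0.
Proof.
  intros [u [Hu Hw]]. rewrite (e12_P3 _ _ Hw). apply sumw_no12.
  intros a Ha E. specialize (Hu a Ha). rewrite E in Hu.
  destruct Hu as [Hu|Hu]; simpl in Hu; discriminate.
Qed.
Lemma Q2_e13 w : Q2 w -> sumw e13 w = 0.
Proof.
  intros [u [Hu Hw]]. rewrite (e13_P3 _ _ Hw). apply sumw_no13.
  intros a Ha E. specialize (Hu a Ha). rewrite E in Hu.
  destruct Hu as [Hu|Hu]; simpl in Hu; discriminate.
Qed.

Lemma in_AB m a : (In a (Aw m) \/ In a (Bw m)) -> fst a = p12 \/ fst a = p23.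
Proof.
  induction m as [|m IH]; simpl; intros [H|H]; try contradiction.
  - destruct H as [<-|[<-|H]]; simpl; auto.
  - apply in_app_or in H. destruct H as [H|H]; [auto|].
    destruct H as [<-|[<-|[]]]; simpl; auto.
Qed.

Lemma in_C m a : In a (Cw m) -> fst a = p13.
Proof. induction m; simpl; [contradiction|]. intros [<-|H]; auto. Qed.

Theorem mainTheorem9 :
  ~ has_finite_index (sub_inter Q2 Q3) Q2 /\ ~ finitely_generated (sub_inter Q2 Q3).
Proof.
  split.
  - intros [reps Hr].
    set (M := fold_right (fun r acc => Z.abs (sumw e12 r) + acc) 0 reps).
    assert (HM : forall r, In r reps -> Z.abs (sumw e12 r) <= M).
    { unfold M; clear. induction reps as [|r0 reps IH]; simpl; [contradiction|].
      assert (0 <= fold_right (fun r acc => Z.abs (sumw e12 r) + acc) 0 reps).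
      { clear. induction reps; simpl; lia. }
      intros r [<-|H']; [lia|]. specialize (IH r H'). lia. }
    assert (HM0 : 0 <= M).
    { unfold M; clear. induction reps; simpl; lia. }
    set (n := S (Z.to_nat M)).
    set (k := repeat (pos p12) n).
    assert (Hk : sumw e12 k = Z.of_nat n).
    { unfold k; clearbody n; clear. induction n as [|n IH]; [reflexivity|].
      unfold sumw in *; cbn [repeat fold_right e12 pos sgn]. rewrite IH. lia. }
    assert (Q2k : Q2 k).
    { exists k; split; [|apply P3eq_refl].
      intros a Ha. unfold k in Ha. apply repeat_spec in Ha. subst a.
      right; reflexivity. }
    destruct (Hr k Q2k) as [r [Hin [_ H3]]].
    apply Q3_e12 in H3. rewrite sumw_app, sumw_winv, Hk in H3 by exact e12_inv.
    specialize (HM r Hin). unfold n in H3. rewrite Nat2Z.inj_succ, Z2Nat.id in H3 by lia.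
    lia.
  - intros [gens [Hg Hgen]].
    set (B := fold_right (fun g acc => (length g + acc)%nat) 0%nat gens).
    assert (HB : forall g, In g gens -> (length g <= B)%nat).
    { unfold B; clear. induction gens as [|g0 gens IH]; simpl; [contradiction|].
      intros g [<-|H]; [lia|]. specialize (IH g H). lia. }
    assert (Hs : forall g, In g gens -> shift g = 0).
    { intros g Hin. destruct (Hg g Hin) as [H2 H3].
      rewrite shift_split, (Q3_e12 _ H3), (Q2_e13 _ H2). reflexivity. }
    set (f := fun p : word * bool => if snd p then fst p else winv (fst p)).
    assert (Hpiece : forall l, (forall p, In p l -> In (fst p) gens) ->
       shift (concat (map f l)) = 0 /\
       forall i, i > Z.of_nat B + 1 -> lamp (concat (map f l)) i = 0).
    { induction l as [|p l IH]; intros Hl.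
      - split; [reflexivity|]. intros; reflexivity.
      - destruct IH as [IH1 IH2]; [intros; apply Hl; simpl; auto|].
        assert (Hp : In (fst p) gens) by (apply Hl; simpl; auto).
        assert (Sp : shift (f p) = 0 /\ (length (f p) <= B)%nat).
        { unfold f; destruct (snd p).
          - split; [apply Hs, Hp|apply HB, Hp].
          - split.
            + unfold shift; rewrite sumw_winv by exact dshift_inv.
              fold (shift (fst p)). rewrite (Hs _ Hp). reflexivity.
            + unfold winv. rewrite length_rev, length_map. apply HB, Hp. }
        destruct Sp as [Sp Lp].
        simpl. split.
        + unfold shift; rewrite sumw_app. fold (shift (f p)). fold (shift (concat (map f l))). lia.
        + intros i Hi. rewrite lamp_app, Sp, lamp_support, IH2; try lia. }
    set (m := S B).
    set (h := Cw m ++ [pos p23] ++ winv (Cw m)).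
    assert (Hh : sub_inter Q2 Q3 h).
    { split.
      - exists (Aw m ++ [pos p23] ++ Bw m). split; [|apply hQ2].
        intros a Ha. apply in_app_or in Ha. destruct Ha as [Ha|Ha].
        + destruct (in_AB m a (or_introl Ha)) as [E|E]; rewrite E; [right|left]; reflexivity.
        + apply in_app_or in Ha. destruct Ha as [[<-|[]]|Ha]; [left; reflexivity|].
          destruct (in_AB m a (or_intror Ha)) as [E|E]; rewrite E; [right|left]; reflexivity.
      - exists h; split; [|apply P3eq_refl].
        intros a Ha. unfold h in Ha. apply in_app_or in Ha. destruct Ha as [Ha|Ha].
        + rewrite (in_C m a Ha); right; reflexivity.
        + apply in_app_or in Ha. destruct Ha as [[<-|[]]|Ha]; [right; reflexivity|].
          destruct (in_winv _ _ Ha) as [b [Hb E]]. rewrite E, (in_C m b Hb).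
          right; reflexivity. }
    destruct (Hgen h Hh) as [l [Hl Heq]].
    destruct (Hpiece l Hl) as [_ H0].
    pose proof (lamp_P3 _ _ Heq (Z.of_nat m + 1)) as K.
    rewrite H0 in K by (unfold m; rewrite Nat2Z.inj_succ; lia).
    unfold h in K. rewrite lamp_conj in K by reflexivity.
    rewrite shift_Cw in K.
    replace (Z.of_nat m + 1 - Z.of_nat m) with 1 in K by lia.
    simpl in K. discriminate.
Qed.
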